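(* Let $M$ be a closed manifold immersed in $(V,\omega)=(\mathbb{R}^{2d},\sum_i dx_i\wedge dy_i)$. (1) Let $n$ be odd. An $n$-gon $\mathbf{Z}=(z_1,\dots,z_n)$ in $V$ is an $n$-periodic orbit of the outer symplectic billiard correspondence if and only if its midpoint polygon $\mathbf{Q}=(Q_1,\dots,Q_n)$, $Q_i=\tfrac12(z_i+z_{i+1})$ (indices mod $n$), is inscribed in $M$ and is a critical point of the restriction to $M^{\times n}$ of $$F(Q_1,\dots,Q_n)=2\sum_{1\le i<j\le n}(-1)^{i+j-1}\omega(Q_i,Q_j).$$ (2) Let $L_1=\mathbb{R}^d_x\times\{0\}$ and $L_2=\{0\}\times\mathbb{R}^d_y$. A polygonal line $\mathbf{Z}=(z_1,\dots,z_{n+1})$ is an $n$-link outer symplectic billiard orbit connecting $L_1$ and $L_2$ if and only if the polygon $\mathbf{Q}=(Q_1,\dots,Q_n)$, $Q_i=\tfrac12(z_i+z_{i+1})$, is inscribed in $M$ and is a critical point of the restriction to $M^{\times n}$ of $$G(Q_1,\dots,Q_n)=2\sum_{i=1}^n q_i\cdot q_i'+4\sum_{1\le i<j\le n}(-1)^{j-i}q_j\cdot q_i',$$ where $Q_i=(q_i,q_i')$ with $q_i,q_i'\in\mathbb{R}^d$.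
   Context: Points of $V$ are written $(x,y)$ with $x,y\in\mathbb{R}^d$, and $\omega((x,y),(x',y'))=x\cdot y'-y\cdot x'$. Points of $M$ are identified with their images; for a point $Q$ of $M$, $T^\omega_QM=\{\xi:\omega(\xi,\zeta)=0\ \forall\zeta\in T_QM\}$. Two points $z,z'$ are in outer symplectic billiard correspondence with respect to $M$ if $\tfrac12(z+z')=Q$ is a point of $M$ and $z'-z\in T^\omega_QM$. An $n$-periodic orbit is an $n$-gon $(z_1,\dots,z_n)$ with $z_i,z_{i+1}$ in correspondence for all $i$ (indices mod $n$). An $n$-link orbit connecting $L_1$ and $L_2$ is $(z_1,\dots,z_{n+1})$ with $z_1\in L_1$, $z_{n+1}\in L_2$ and $z_i,z_{i+1}$ in correspondence for $i=1,\dots,n$. ''Inscribed in $M$'' means every $Q_i$ is a point of $M$. *)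

(* Defs.v *)
From HB Require Import structures.
From mathcomp Require Import all_boot all_order all_algebra.
From mathcomp Require Import all_classical all_reals all_analysis.
Set Implicit Arguments. Unset Strict Implicit. Unset Printing Implicit Defensive.
Import Order.TTheory GRing.Theory Num.Theory.
Local Open Scope ring_scope.

(* V = R^d_x * R^d_y ; a point is (x, y). *)
Definition V (R : realType) (d : nat) := ('rV[R]_d * 'rV[R]_d)%type.

Definition dot (R : realType) (d : nat) (u v : 'rV[R]_d) : R :=
  \sum_(i < d) u ord0 i * v ord0 i.

Definition omega (R : realType) (d : nat) (z z' : V R d) : R :=
  dot z.1 z'.2 - dot z.2 z'.1.

(* The immersed manifold M is given by an immersion phi : N -> V, points of M
   being identified with points p of N (image phi p); T p is the tangent space
   T_{phi p} M = d phi_p (T_p N), a linear subspace of V. *)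

Definition in_somp (R : realType) (d : nat) (T : {vspace V R d}) (xi : V R d) :=
  forall zeta : V R d, zeta \in T -> omega xi zeta = 0.

Definition osb_corr (R : realType) (d : nat) (N : Type) (phi : N -> V R d)
    (T : N -> {vspace V R d}) (z z' : V R d) :=
  exists p : N, phi p = (1/2 : R) *: (z + z') /\ in_somp (T p) (z' - z).

(* p : 'I_n -> N (a point of M^n) is a critical point of the restriction of
   Fn : (I_n -> V) -> R to M^n: the derivative of Fn at Q = phi o p vanishes on
   every tangent vector (xi_i) with xi_i in T_{Q_i} M. *)
Definition crit_on_Mn (R : realType) (d : nat) (N : Type) (phi : N -> V R d)
    (T : N -> {vspace V R d}) (n : nat) (Fn : ('I_n -> V R d) -> R)
    (p : 'I_n -> N) :=
  forall xi : 'I_n -> V R d, (forall i, xi i \in T (p i)) ->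
    is_derive (0 : R) (1 : R) (fun t : R => Fn (fun i => phi (p i) + t *: xi i)) 0.

(* F(Q) = 2 sum_{1<=i<j<=n} (-1)^(i+j-1) omega(Q_i,Q_j); with 0-based indices
   the exponent i+j-1 becomes (i+1)+(j+1)-1 = i+j+1. *)
Definition Ffun (R : realType) (d n : nat) (Q : 'I_n -> V R d) : R :=
  2 * \sum_(i < n) \sum_(j < n | (i < j)%N)
        (-1) ^+ (i + j + 1)%N * omega (Q i) (Q j).

Definition Gfun (R : realType) (d n : nat) (Q : 'I_n -> V R d) : R :=
  2 * \sum_(i < n) dot (Q i).1 (Q i).2
  + 4 * \sum_(i < n) \sum_(j < n | (i < j)%N)
        (-1) ^+ (j - i)%N * dot (Q j).1 (Q i).2.

Definition midpoly (R : realType) (d n : nat) (Z : 'I_n -> V R d) : 'I_n -> V R d :=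
  fun i => (1/2 : R) *: (Z i + Z (ordS i)).

Definition midline (R : realType) (d n : nat) (Z : 'I_n.+1 -> V R d) : 'I_n -> V R d :=
  fun i => (1/2 : R) *: (Z (widen_ord (leqnSn n) i) + Z (lift ord0 i)).

Definition L1 (R : realType) (d : nat) (z : V R d) := z.2 = 0.
Definition L2 (R : realType) (d : nat) (z : V R d) := z.1 = 0.

(* Main.v *)
Require Import Defs.
From HB Require Import structures.
From mathcomp Require Import all_boot all_order all_algebra.
From mathcomp Require Import all_classical all_reals all_analysis.
From mathcomp Require Import ring lra.
Import Order.TTheory GRing.Theory Num.Theory.
Local Open Scope ring_scope.

Lemma deriv_quad (R : realType) (a b c : R) (f : R -> R) :
  (forall t, f t = a + t * (b + t * c)) -> (is_derive (0:R) (1:R) f 0 <-> b = 0).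
Proof.
move=> hf.
have -> : f = horner (a%:P + 'X * (b%:P + 'X * c%:P)).
  by apply/funext => t; rewrite hf !hornerE.
have H := is_derive_poly (a%:P + 'X * (b%:P + 'X * c%:P)) 0.
have E : (deriv (a%:P + 'X * (b%:P + 'X * c%:P))).[0] = b.
  rewrite !poly.derivE /= !hornerE; lra.
rewrite E in H.
split => [H2|b0]; last by move: H; rewrite b0.
by have := @derive_val _ _ _ _ _ _ _ H; rewrite (@derive_val _ _ _ _ _ _ _ H2) => ->.
Qed.
Section Bil.
Variables (R : realType) (d : nat).
Implicit Types (u v w : 'rV[R]_d) (a b c e : V R d).

Lemma dotDl u v w : dot (u + v) w = dot u w + dot v w.
Proof. by rewrite /dot -big_split; apply: eq_bigr => i _; rewrite mxE mulrDl. Qed.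
Lemma dotZl (k : R) u w : dot (k *: u) w = k * dot u w.
Proof. by rewrite /dot mulr_sumr; apply: eq_bigr => i _; rewrite mxE mulrA. Qed.
Lemma dotC u v : dot u v = dot v u.
Proof. by rewrite /dot; apply: eq_bigr => i _; rewrite mulrC. Qed.
Lemma dotDr u v w : dot w (u + v) = dot w u + dot w v.
Proof. by rewrite !(dotC w) dotDl. Qed.
Lemma dotZr (k : R) u w : dot w (k *: u) = k * dot w u.
Proof. by rewrite !(dotC w) dotZl. Qed.
Lemma dot0r u : dot u 0 = 0.
Proof. by rewrite /dot big1 // => i _; rewrite mxE mulr0. Qed.
Lemma dotNr u v : dot u (- v) = - dot u v.
Proof. by rewrite -scaleN1r dotZr mulN1r. Qed.
Lemma dotBr u v w : dot w (u - v) = dot w u - dot w v.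
Proof. by rewrite dotDr dotNr. Qed.
Lemma dot_sumr I (r : seq I) (P : pred I) (F : I -> 'rV[R]_d) u :
  dot u (\sum_(i <- r | P i) F i) = \sum_(i <- r | P i) dot u (F i).
Proof.
by apply: (big_rec2 (fun x y => dot u x = y)) => [|i a b _ <-]; rewrite ?dot0r ?dotDr.
Qed.

Lemma fst_sum I (r : seq I) (P : pred I) (F : I -> V R d) :
  (\sum_(i <- r | P i) F i).1 = \sum_(i <- r | P i) (F i).1.
Proof. by apply: (big_rec2 (fun x y => x.1 = y)) => // i a b _ <-. Qed.
Lemma snd_sum I (r : seq I) (P : pred I) (F : I -> V R d) :
  (\sum_(i <- r | P i) F i).2 = \sum_(i <- r | P i) (F i).2.
Proof. by apply: (big_rec2 (fun x y => x.2 = y)) => // i a b _ <-. Qed.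

Lemma omegaC a b : omega a b = - omega b a.
Proof. by rewrite /omega opprB (dotC a.1) (dotC a.2). Qed.
Lemma omegaDr a b c : omega a (b + c) = omega a b + omega a c.
Proof. rewrite /omega /= dotDr dotDr; ring. Qed.
Lemma omegaZr (k : R) a b : omega a (k *: b) = k * omega a b.
Proof. rewrite /omega /= dotZr dotZr; ring. Qed.
Lemma omegaDl a b c : omega (b + c) a = omega b a + omega c a.
Proof. by rewrite omegaC omegaDr opprD -!omegaC. Qed.
Lemma omegaZl (k : R) a b : omega (k *: b) a = k * omega b a.
Proof. by rewrite omegaC omegaZr -mulrN -omegaC. Qed.
Lemma omega0r a : omega a 0 = 0.
Proof. by rewrite /omega /= !dot0r subr0. Qed.
Lemma omega0l a : omega 0 a = 0.
Proof. by rewrite omegaC omega0r oppr0. Qed.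
Lemma omegaNr a b : omega a (- b) = - omega a b.
Proof. by rewrite -scaleN1r omegaZr mulN1r. Qed.
Lemma omegaBr a b c : omega a (b - c) = omega a b - omega a c.
Proof. by rewrite omegaDr omegaNr. Qed.
Lemma omega_sumr I (r : seq I) (P : pred I) (F : I -> V R d) a :
  omega a (\sum_(i <- r | P i) F i) = \sum_(i <- r | P i) omega a (F i).
Proof.
by apply: (big_rec2 (fun x y => omega a x = y)) => [|i x y _ <-]; rewrite ?omega0r ?omegaDr.
Qed.

Lemma omega_quad a b c e (t : R) :
  omega (a + t *: b) (c + t *: e) =
  omega a c + t * ((omega a e + omega b c) + t * omega b e).
Proof. rewrite omegaDl !omegaDr !omegaZl !omegaZr; ring. Qed.
Lemma dot_quad u v w w' (t : R) :
  dot (u + t *: v) (w + t *: w') =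
  dot u w + t * ((dot u w' + dot v w) + t * dot v w').
Proof. rewrite dotDl !dotDr !dotZl !dotZr; ring. Qed.
End Bil.

Lemma sum_quad (R : realType) I (r : seq I) (P : pred I) (A B C : I -> R) (t : R) :
  \sum_(i <- r | P i) (A i + t * (B i + t * C i)) =
  \sum_(i <- r | P i) A i + t * (\sum_(i <- r | P i) B i + t * \sum_(i <- r | P i) C i).
Proof. by rewrite [t * \sum_(i <- r | P i) C i]mulr_sumr -big_split mulr_sumr -big_split. Qed.
Lemma mul_quad (R : realType) (s A B C t : R) :
  s * (A + t * (B + t * C)) = s * A + t * (s * B + t * (s * C)).
Proof. ring. Qed.

Definition BF (R : realType) d n (Q xi : 'I_n -> V R d) : R :=
  2 * \sum_(i < n) \sum_(j < n | (i < j)%N)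
        (-1) ^+ (i + j + 1)%N * (omega (Q i) (xi j) + omega (xi i) (Q j)).
Arguments BF {R d n}.

Lemma Ffun_exp (R : realType) d n (Q xi : 'I_n -> V R d) (t : R) :
  Ffun (fun i => Q i + t *: xi i) = Ffun Q + t * (BF Q xi + t * Ffun xi).
Proof.
rewrite /Ffun /BF.
under eq_bigr do under eq_bigr do rewrite omega_quad mul_quad.
under eq_bigr do rewrite sum_quad.
rewrite sum_quad; ring.
Qed.

Definition BG (R : realType) d n (Q xi : 'I_n -> V R d) : R :=
  2 * \sum_(i < n) (dot (Q i).1 (xi i).2 + dot (xi i).1 (Q i).2)
  + 4 * \sum_(i < n) \sum_(j < n | (i < j)%N)
        (-1) ^+ (j - i)%N * (dot (Q j).1 (xi i).2 + dot (xi j).1 (Q i).2).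
Arguments BG {R d n}.

Lemma Gfun_exp (R : realType) d n (Q xi : 'I_n -> V R d) (t : R) :
  Gfun (fun i => Q i + t *: xi i) = Gfun Q + t * (BG Q xi + t * Gfun xi).
Proof.
rewrite /Gfun /BG /=.
under eq_bigr do rewrite dot_quad.
under [X in _ + 4 * X = _]eq_bigr do under eq_bigr do rewrite dot_quad mul_quad.
under [X in _ + 4 * X = _]eq_bigr do rewrite sum_quad.
rewrite !sum_quad; ring.
Qed.

Lemma crit_char (R : realType) d (N : Type) (phi : N -> V R d)
    (T : N -> {vspace V R d}) n (Fn : ('I_n -> V R d) -> R) (p : 'I_n -> N)
    (Q D : 'I_n -> V R d) (B : ('I_n -> V R d) -> R) :
  (forall i, phi (p i) = Q i) ->
  (forall xi t, Fn (fun i => Q i + t *: xi i) = Fn Q + t * (B xi + t * Fn xi)) ->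
  (forall xi, B xi = \sum_(i < n) omega (xi i) (D i)) ->
  (crit_on_Mn phi T Fn p <-> forall i, in_somp (T (p i)) (D i)).
Proof.
move=> hQ hexp hB.
have E xi : (fun t : R => Fn (fun i => phi (p i) + t *: xi i)) =
            (fun t => Fn (fun i => Q i + t *: xi i)).
  by apply/funext => t; congr Fn; apply/funext => i; rewrite hQ.
split.
- move=> hc i zeta hz.
  pose xi := fun j : 'I_n => if j == i then zeta else 0.
  have hxi : forall j, xi j \in T (p j).
    by move=> j; rewrite /xi; case: eqP => [->|_]; rewrite ?mem0v.
  have := hc xi hxi; rewrite E.
  move/(@deriv_quad _ _ _ _ _ (hexp xi)); rewrite hB (bigD1 i) //= big1 ?addr0.
    by rewrite /xi eqxx omegaC => /eqP; rewrite oppr_eq0 => /eqP.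
  by move=> j /negPf hj; rewrite /xi hj omega0l.
- move=> hs xi hxi; rewrite E; apply/(@deriv_quad _ _ _ _ _ (hexp xi)).
  rewrite hB big1 // => i _.
  by rewrite omegaC hs ?oppr0.
Qed.
Lemma sgn_sq (R : realType) (k : nat) : (-1) ^+ k * (-1) ^+ k = 1 :> R.
Proof. by rewrite -exprD -signr_odd oddD addbb. Qed.

Lemma tele (R : realType) (W : lmodType R) (h : nat -> W) a b : (a <= b)%N ->
  \sum_(a <= j < b) (-1) ^+ j *: (h j + h j.+1) = (-1) ^+ a *: h a - (-1) ^+ b *: h b.
Proof.
move=> hab.
have := telescope_sumr (fun k => - ((-1) ^+ k *: h k)) hab.
rewrite opprK addrC => <-; apply: eq_bigr => j _.
by rewrite opprK exprS mulN1r scaleNr opprK scalerDr addrC.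
Qed.

Lemma sum_gt (W : zmodType) n (i : nat) (F : 'I_n -> W) (G : nat -> W) :
  (forall j : 'I_n, F j = G j) ->
  \sum_(j < n | (i < j)%N) F j = \sum_(i.+1 <= j < n) G j.
Proof. by move=> hF; rewrite big_geq_mkord; apply: eq_big => // j; rewrite hF. Qed.

Lemma sum_lt (W : zmodType) n (i : nat) (F : 'I_n -> W) (G : nat -> W) :
  (i <= n)%N -> (forall j : 'I_n, F j = G j) ->
  \sum_(j < n | (j < i)%N) F j = \sum_(0 <= j < i) G j.
Proof.
move=> hi hF; rewrite big_mkord (big_ord_widen _ G hi).
by apply: eq_bigr => j _; rewrite hF.
Qed.
Lemma W1 (R : realType) d (m : nat) (Z : 'I_m.+1 -> V R d) (i : 'I_m.+1) : odd m.+1 ->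
  \sum_(j < m.+1 | (i < j)%N) (2 * (-1) ^+ (i + j + 1)%N) *: midpoly Z j
  - \sum_(j < m.+1 | (j < i)%N) (2 * (-1) ^+ (i + j + 1)%N) *: midpoly Z j
  = Z (ordS i) - Z i.
Proof.
move=> hodd.
pose z := fun k : nat => Z (inord (k %% m.+1)).
have zj : forall j : 'I_m.+1, Z j = z j.
  by move=> j; rewrite /z modn_small // inord_val.
have zS : forall j : 'I_m.+1, Z (ordS j) = z j.+1.
  by move=> j; congr Z; apply: val_inj; rewrite /= inordK // ltn_pmod.
have hZ : forall j : 'I_m.+1, (2 * (-1) ^+ (i + j + 1)%N) *: midpoly Z j =
    (-1) ^+ i.+1 *: ((-1) ^+ (val j) *: (z j + z j.+1)).
  move=> j; rewrite /midpoly !scalerA zj zS; congr (_ *: _).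
  by rewrite addnAC addn1 exprD; field.
rewrite (@sum_gt _ _ _ _ (fun j => (-1) ^+ i.+1 *: ((-1) ^+ j *: (z j + z j.+1)))) //.
rewrite (@sum_lt _ _ _ _ (fun j => (-1) ^+ i.+1 *: ((-1) ^+ j *: (z j + z j.+1)))) //; last first.
  exact: ltnW.
rewrite -!scaler_sumr !tele //.
have -> : z m.+1 = z 0 by rewrite /z modnn mod0n.
rewrite zS zj expr0 scale1r -[(-1) ^+ m.+1]signr_odd hodd expr1 exprS mulN1r.
rewrite !scalerBr !scalerA mulrNN sgn_sq mulrN1 opprK mulNr sgn_sq scale1r !scaleNr scale1r.
by rewrite opprK opprD opprK addrA subrK.
Qed.
Lemma BF_W (R : realType) d n (Q xi : 'I_n -> V R d) :
  BF Q xi = \sum_(i < n) omega (xi i)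
    (\sum_(j < n | (i < j)%N) (2 * (-1) ^+ (i + j + 1)%N) *: Q j
     - \sum_(j < n | (j < i)%N) (2 * (-1) ^+ (i + j + 1)%N) *: Q j).
Proof.
have R1 : \sum_(i < n) omega (xi i)
    (\sum_(j < n | (i < j)%N) (2 * (-1) ^+ (i + j + 1)%N) *: Q j
     - \sum_(j < n | (j < i)%N) (2 * (-1) ^+ (i + j + 1)%N) *: Q j) =
  \sum_(i < n) \sum_(j < n | (i < j)%N) (2 * (-1) ^+ (i + j + 1)%N) * omega (xi i) (Q j)
  - \sum_(i < n) \sum_(j < n | (j < i)%N) (2 * (-1) ^+ (i + j + 1)%N) * omega (xi i) (Q j).
  rewrite -sumrB; apply: eq_bigr => i _; rewrite omegaBr !omega_sumr.
  by congr (_ - _); apply: eq_bigr => j _; rewrite omegaZr.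
rewrite R1 /BF.
have L1 : 2 * \sum_(i < n) \sum_(j < n | (i < j)%N)
        (-1) ^+ (i + j + 1)%N * (omega (Q i) (xi j) + omega (xi i) (Q j)) =
  \sum_(i < n) \sum_(j < n | (i < j)%N) (2 * (-1) ^+ (i + j + 1)%N) * omega (xi i) (Q j)
  + \sum_(i < n) \sum_(j < n | (i < j)%N) (2 * (-1) ^+ (i + j + 1)%N) * omega (Q i) (xi j).
  rewrite mulr_sumr -big_split; apply: eq_bigr => i _.
  rewrite mulr_sumr -big_split; apply: eq_bigr => j _ /=; ring.
rewrite L1; congr (_ + _).
rewrite (exchange_big_dep xpredT) //= -sumrN; apply: eq_bigr => i _.
rewrite -sumrN; apply: eq_bigr => j _.
by rewrite omegaC [(j + i)%N]addnC mulrN.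
Qed.
Lemma BF_mid (R : realType) d n (Z xi : 'I_n -> V R d) : odd n ->
  BF (midpoly Z) xi = \sum_(i < n) omega (xi i) (Z (ordS i) - Z i).
Proof.
case: n Z xi => [|m] Z xi //= hodd.
by rewrite BF_W; apply: eq_bigr => i _; rewrite W1.
Qed.

Lemma BG_W (R : realType) d n (Q xi : 'I_n -> V R d) :
  BG Q xi = \sum_(k < n) (dot (xi k).1
       (2 *: (Q k).2 + \sum_(i < n | (i < k)%N) (4 * (-1) ^+ (k - i)%N) *: (Q i).2)
     - dot (xi k).2
       (- (2 *: (Q k).1 + \sum_(j < n | (k < j)%N) (4 * (-1) ^+ (j - k)%N) *: (Q j).1))).
Proof.
transitivity (\sum_(k < n) 2 * dot (xi k).1 (Q k).2
  + \sum_(k < n) \sum_(i < n | (i < k)%N) (4 * (-1) ^+ (k - i)%N) * dot (xi k).1 (Q i).2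
  + (\sum_(k < n) 2 * dot (xi k).2 (Q k).1
  + \sum_(k < n) \sum_(j < n | (k < j)%N) (4 * (-1) ^+ (j - k)%N) * dot (xi k).2 (Q j).1)); last first.
  rewrite -!big_split; apply: eq_bigr => k _ /=.
  rewrite dotNr opprK !dotDr !dot_sumr !dotZr; congr (_ + _ + (_ + _)).
    by apply: eq_bigr => i _; rewrite dotZr.
  by apply: eq_bigr => i _; rewrite dotZr.
rewrite /BG.
have eq1 : 2 * \sum_(i < n) (dot (Q i).1 (xi i).2 + dot (xi i).1 (Q i).2) =
  \sum_(k < n) 2 * dot (xi k).1 (Q k).2 + \sum_(k < n) 2 * dot (xi k).2 (Q k).1.
  rewrite mulr_sumr -big_split; apply: eq_bigr => i _ /=; rewrite (@dotC _ _ (Q i).1); ring.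
have eq2 : 4 * \sum_(i < n) \sum_(j < n | (i < j)%N)
        (-1) ^+ (j - i)%N * (dot (Q j).1 (xi i).2 + dot (xi j).1 (Q i).2) =
  \sum_(i < n) \sum_(j < n | (i < j)%N) (4 * (-1) ^+ (j - i)%N) * dot (xi j).1 (Q i).2
  + \sum_(k < n) \sum_(j < n | (k < j)%N) (4 * (-1) ^+ (j - k)%N) * dot (xi k).2 (Q j).1.
  rewrite mulr_sumr -big_split; apply: eq_bigr => i _.
  rewrite mulr_sumr -big_split; apply: eq_bigr => j _ /=; rewrite (@dotC _ _ (Q j).1); ring.
rewrite eq1 eq2 addrACA; congr (_ + (_ + _)).
by rewrite (exchange_big_dep xpredT).
Qed.
Lemma sgn_sub (R : realType) (i k : nat) : (i <= k)%N ->
  (-1) ^+ (k - i) = (-1) ^+ k * (-1) ^+ i :> R.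
Proof. by move=> h; rewrite -[in RHS](subnK h) exprD -mulrA sgn_sq mulr1. Qed.

Lemma two_half (R : realType) : (2 : R) * (1 / 2) = 1.
Proof. lra. Qed.

Lemma widen_inord n (i : 'I_n) : widen_ord (leqnSn n) i = inord i.
Proof. by apply: val_inj; rewrite /= inordK // ltnW // ltnS ltn_ord. Qed.
Lemma lift_inord n (i : 'I_n) : lift ord0 i = inord i.+1 :> 'I_n.+1.
Proof. by apply: val_inj; rewrite /= inordK // ltnS ltn_ord. Qed.

Lemma Dy2 (R : realType) d n (Z : 'I_n.+1 -> V R d) (k : 'I_n) : (Z ord0).2 = 0 ->
  2 *: (midline Z k).2 + \sum_(i < n | (i < k)%N) (4 * (-1) ^+ (k - i)%N) *: (midline Z i).2
  = (Z (lift ord0 k) - Z (widen_ord (leqnSn n) k)).2.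
Proof.
move=> h0.
pose y := fun j : nat => (Z (inord j)).2.
have hm : forall i : 'I_n, (midline Z i).2 = (1/2) *: (y i + y i.+1).
  by move=> i; rewrite /midline /= widen_inord lift_inord.
rewrite (eq_bigr (fun j : 'I_n => (2 * (-1) ^+ k) *: ((-1) ^+ j *: (y j + y j.+1)))); last first.
  move=> j hj; rewrite hm !scalerA sgn_sub ?(ltnW hj) //; congr (_ *: _).
  have := two_half R; lra.
rewrite (@sum_lt _ _ _ _ (fun j => (2 * (-1) ^+ k) *: ((-1) ^+ j *: (y j + y j.+1)))) //; last first.
  exact: ltnW.
rewrite -scaler_sumr tele // /= widen_inord lift_inord -/(y k) -/(y k.+1).
have -> : y 0%N = 0 by rewrite /y -h0; congr (Z _).2; apply: val_inj; rewrite /= inordK.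
rewrite scalerA two_half scale1r.
rewrite expr0 scale1r sub0r scalerN scalerA -mulrA sgn_sq mulr1.
by rewrite scaler_nat mulr2n opprD addrACA subrr add0r.
Qed.

Lemma Dx2 (R : realType) d n (Z : 'I_n.+1 -> V R d) (k : 'I_n) : (Z ord_max).1 = 0 ->
  - (2 *: (midline Z k).1 + \sum_(j < n | (k < j)%N) (4 * (-1) ^+ (j - k)%N) *: (midline Z j).1)
  = (Z (lift ord0 k) - Z (widen_ord (leqnSn n) k)).1.
Proof.
move=> h0.
pose x := fun j : nat => (Z (inord j)).1.
have hm : forall i : 'I_n, (midline Z i).1 = (1/2) *: (x i + x i.+1).
  by move=> i; rewrite /midline /= widen_inord lift_inord.
rewrite (eq_bigr (fun j : 'I_n => (2 * (-1) ^+ k) *: ((-1) ^+ j *: (x j + x j.+1)))); last first.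
  move=> j hj; rewrite hm !scalerA sgn_sub ?(ltnW hj) //; congr (_ *: _).
  have := two_half R; lra.
rewrite (@sum_gt _ _ _ _ (fun j => (2 * (-1) ^+ k) *: ((-1) ^+ j *: (x j + x j.+1)))) //.
rewrite -scaler_sumr tele // /= widen_inord lift_inord -/(x k) -/(x k.+1).
have -> : x n = 0 by rewrite /x -h0; congr (Z _).1; apply: val_inj; rewrite /= inordK.
rewrite scalerA two_half scale1r scaler0 subr0 scalerA exprS mulN1r mulrN -mulrA sgn_sq mulr1 scaleNr.
by rewrite opprB scaler_nat mulr2n [x k + _]addrC opprD addrA addrK.
Qed.
Lemma BG_mid (R : realType) d n (Z : 'I_n.+1 -> V R d) (xi : 'I_n -> V R d) :
  L1 (Z ord0) -> L2 (Z ord_max) ->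
  BG (midline Z) xi =
  \sum_(k < n) omega (xi k) (Z (lift ord0 k) - Z (widen_ord (leqnSn n) k)).
Proof.
move=> h1 h2; rewrite BG_W; apply: eq_bigr => k _.
by rewrite Dy2 // Dx2.
Qed.

Theorem mainTheorem8 (R : realType) (d : nat) (N : Type) (phi : N -> V R d)
    (T : N -> {vspace V R d}) :
  (* (1) periodic orbits, n odd *)
  (forall (n : nat), odd n -> forall Z : 'I_n -> V R d,
     (forall i : 'I_n, osb_corr phi T (Z i) (Z (ordS i))) <->
     (exists p : 'I_n -> N,
        (forall i, phi (p i) = midpoly Z i) /\
        crit_on_Mn phi T (@Ffun R d n) p))
  /\
  (* (2) n-link orbits connecting L1 and L2 *)
  (forall (n : nat) (Z : 'I_n.+1 -> V R d),
     L1 (Z ord0) -> L2 (Z ord_max) ->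
     ((forall i : 'I_n,
         osb_corr phi T (Z (widen_ord (leqnSn n) i)) (Z (lift ord0 i))) <->
      (exists p : 'I_n -> N,
         (forall i, phi (p i) = midline Z i) /\
         crit_on_Mn phi T (@Gfun R d n) p))).
Proof.
split.
- move=> n hodd Z; split.
  + move=> h; have [p hp] := choice h.
    have hQ : forall i, phi (p i) = midpoly Z i by move=> i; case: (hp i).
    exists p; split => //.
    apply/(@crit_char _ _ _ phi T _ _ p (midpoly Z) (fun i => Z (ordS i) - Z i)
            (BF (midpoly Z)) hQ (@Ffun_exp _ _ _ (midpoly Z))
            (fun xi => @BF_mid _ _ _ Z xi hodd)).
    by move=> i; case: (hp i).
  + move=> [p [hQ hc]] i.
    have := (@crit_char _ _ _ phi T _ _ p (midpoly Z) (fun i => Z (ordS i) - Z i)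
            (BF (midpoly Z)) hQ (@Ffun_exp _ _ _ (midpoly Z))
            (fun xi => @BF_mid _ _ _ Z xi hodd)).1 hc => hs.
    by exists (p i); split; [rewrite hQ | exact: hs].
- move=> n Z h1 h2; split.
  + move=> h; have [p hp] := choice h.
    have hQ : forall i, phi (p i) = midline Z i by move=> i; case: (hp i).
    exists p; split => //.
    apply/(@crit_char _ _ _ phi T _ _ p (midline Z)
            (fun k => Z (lift ord0 k) - Z (widen_ord (leqnSn n) k))
            (BG (midline Z)) hQ (@Gfun_exp _ _ _ (midline Z))
            (fun xi => @BG_mid _ _ _ Z xi h1 h2)).
    by move=> i; case: (hp i).
  + move=> [p [hQ hc]] i.
    have := (@crit_char _ _ _ phi T _ _ p (midline Z)
            (fun k => Z (lift ord0 k) - Z (widen_ord (leqnSn n) k))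
            (BG (midline Z)) hQ (@Gfun_exp _ _ _ (midline Z))
            (fun xi => @BG_mid _ _ _ Z xi h1 h2)).1 hc => hs.
    by exists (p i); split; [rewrite hQ | exact: hs].
Qed.
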